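(* Let $\mathfrak g$ be a finite-dimensional complex simple Lie algebra with dual Coxeter number $h^\vee$ and invariant form $\langle\cdot,\cdot\rangle$ normalized so that the Killing form equals $2h^\vee\langle\cdot,\cdot\rangle$; let $\{v^{(i)}\},\{w^{(i)}\}$ be dual bases of $\mathfrak g$ with respect to $\langle\cdot,\cdot\rangle$. Let $x\in\mathfrak g$ be nilpotent and $\kappa\ne -h^\vee$. Consider the Lie algebra with generators $a_m$ ($a\in\mathfrak g$ linear, $m\in\mathbb Z$) and relations $[a_m,b_n]=[a,b]_{m+n}+\delta_{m,-n}\kappa\langle [x,a]+ma,b\rangle$, and a module $M$ over it on which for every $v\in M$ and $a\in\mathfrak g$ we have $a_mv=0$ for $m\gg0$. Define on $M$ $$L_n=\frac{1}{2(\kappa+h^\vee)}\Big(\sum_i\sum_{m\in\mathbb Z}:v^{(i)}_m w^{(i)}_{n-m}:\;-\;\sum_i\big[[x,v^{(i)}],w^{(i)}\big]_n\Big),$$ where $:a_mb_k:=a_mb_k$ if $m<0$ and $:a_mb_k:=b_ka_m$ if $m\ge0$. Then for all $a\in\mathfrak g$ and $n\in\mathbb Z$, $$[L_{-1},a_n]=-n\,a_{n-1}-([x,a])_{n-1}.$$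
   Context: This is the twisted Sugawara operator for the $g$-twisted mode algebra of the affine vertex algebra at level $\kappa$ with $g=e^{-2\pi i x}$ (the case of trivial semisimple part $s=0$). *)

(* Defs.v *)
From HB Require Import structures.
From mathcomp Require Import all_boot all_order all_algebra.
From mathcomp Require Import classical_sets fsbigop reals.
From mathcomp.real_closed Require Import complex.
Set Implicit Arguments. Unset Strict Implicit. Unset Printing Implicit Defensive.
Import Order.TTheory GRing.Theory Num.Theory.
Local Open Scope ring_scope.

Section Sugawara.
Variable R : realType.
Local Notation C := (R[i]).
Variable d : nat.
Local Notation g := 'rV[C]_d.

Definition lie_bracket (br : g -> g -> g) : Prop :=
  [/\ (forall k a b c, br (k *: a + b) c = k *: br a c + br b c),
      (forall k a b c, br a (k *: b + c) = k *: br a b + br a c),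
      (forall a, br a a = 0) &
      (forall a b c, br a (br b c) + br b (br c a) + br c (br a b) = 0)].

Definition lie_ideal (br : g -> g -> g) (I : 'M[C]_d) : Prop :=
  forall a v, (v <= I)%MS -> (br a v <= I)%MS.

Definition lie_simple (br : g -> g -> g) : Prop :=
  (exists a b, br a b != 0) /\
  forall I : 'M[C]_d, lie_ideal br I -> \rank I = 0%N \/ \rank I = d.

Definition killing (br : g -> g -> g) (a b : g) : C :=
  \tr (lin1_mx (br a) *m lin1_mx (br b)).

Definition invariant_form (br : g -> g -> g) (form : g -> g -> C) : Prop :=
  [/\ (forall k a b c, form (k *: a + b) c = k * form a c + form b c),
      (forall a b, form a b = form b a),
      (forall a b c, form (br a b) c = form a (br b c)) &
      (forall a, (forall b, form a b = 0) -> a = 0)].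

Definition lie_nilpotent (br : g -> g -> g) (x : g) : Prop :=
  exists k : nat, forall v, iter k (br x) v = 0.

Variable M : lmodType C.

(* M is a module over the (g = e^{-2 pi i x})-twisted mode algebra at level kappa:
   rho a m is the action of the generator a_m *)
Definition twisted_module (br : g -> g -> g) (form : g -> g -> C) (x : g)
  (kappa : C) (rho : g -> int -> M -> M) : Prop :=
  [/\ (forall k a b m u, rho (k *: a + b) m u = k *: rho a m u + rho b m u),
      (forall k a m u u', rho a m (k *: u + u') = k *: rho a m u + rho a m u'),
      (forall a b m n u,
          rho a m (rho b n u) - rho b n (rho a m u) =
          rho (br a b) (m + n) u
          + ((m == - n)%:R * kappa * form (br x a + m%:~R *: a) b) *: u) &
      (forall u a, exists N : int, forall m : int, N <= m -> rho a m u = 0)].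

Definition normal_ord (rho : g -> int -> M -> M) (a b : g) (m k : int) (u : M) : M :=
  if m < 0 then rho a m (rho b k u) else rho b k (rho a m u).

Definition sugawara (br : g -> g -> g) (x : g) (kappa : C) (hv : nat)
  (vb wb : 'I_d -> g) (rho : g -> int -> M -> M) (n : int) (u : M) : M :=
  (2 * (kappa + hv%:R))^-1 *:
    (\sum_(i < d) (\sum_(m \in [set: int]) normal_ord rho (vb i) (wb i) m (n - m) u)%classic
     - \sum_(i < d) rho (br (br x (vb i)) (wb i)) n u).

End Sugawara.

(* Main.v *)
Require Import Defs.
From HB Require Import structures.
From mathcomp Require Import all_boot all_order all_algebra.
From mathcomp Require Import classical_sets fsbigop reals.
From mathcomp.real_closed Require Import complex.
Import Order.TTheory GRing.Theory Num.Theory.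
From mathcomp Require Import zify ring.
Local Open Scope ring_scope.

Set Implicit Arguments.
Section Lin.
Variables (K : pzRingType) (U : lmodType K) (V : zmodType) (s : K -> V -> V) (f : U -> V).
Hypothesis s1 : forall y, s 1 y = y.
Hypothesis Hf : forall k a b, f (k *: a + b) = s k (f a) + f b.
Lemma lfD a b : f (a + b) = f a + f b.
Proof. by have := Hf 1 a b; rewrite scale1r s1. Qed.
Lemma lf0 : f 0 = 0.
Proof. by have := lfD 0 0; rewrite addr0 => h; apply: (addrI (f 0)); rewrite addr0 -h. Qed.
Lemma lfZ k a : f (k *: a) = s k (f a).
Proof. by have := Hf k a 0; rewrite !addr0 lf0 addr0. Qed.
Lemma lfN a : f (- a) = - f a.
Proof. by apply/eqP; rewrite -addr_eq0 -lfD addNr lf0. Qed.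
Lemma lfB a b : f (a - b) = f a - f b.
Proof. by rewrite lfD lfN. Qed.
Lemma lf_sum I (r : seq I) (P : pred I) (F : I -> U) :
  f (\sum_(i <- r | P i) F i) = \sum_(i <- r | P i) f (F i).
Proof.
apply: (big_rec2 (fun y1 y2 => f y1 = y2)); first exact: lf0.
by move=> i y1 y2 _ <-; rewrite lfD.
Qed.
End Lin.
Unset Implicit Arguments.

Section Main.
Variable R : realType.
Local Notation C := (R[i]).
Variable d : nat.
Local Notation g := 'rV[C]_d.
Variables (br : g -> g -> g) (form : g -> g -> C) (hv : nat) (vb wb : 'I_d -> g)
  (x : g) (kappa : C) (M : lmodType C) (rho : g -> int -> M -> M).
Hypotheses (Hlie : lie_bracket br) (Hform : invariant_form br form)
  (Hkill : forall a b, killing br a b = 2 * hv%:R * form a b)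
  (Hdual : forall i j, form (vb i) (wb j) = (i == j)%:R)
  (Htw : twisted_module br form x kappa rho).

Let Hbl : forall k a b c, br (k *: a + b) c = k *: br a c + br b c.
Proof. by case: Hlie. Qed.
Let Hbr : forall k a b c, br a (k *: b + c) = k *: br a b + br a c.
Proof. by case: Hlie. Qed.
Let Hfl : forall k a b c, form (k *: a + b) c = k * form a c + form b c.
Proof. by case: Hform. Qed.
Lemma formC a b : form a b = form b a.
Proof. by case: Hform => _ H _ _; apply: H. Qed.
Lemma formI a b c : form (br a b) c = form a (br b c).
Proof. by case: Hform => _ _ H _; apply: H. Qed.
Lemma formND a : (forall b, form a b = 0) -> a = 0.
Proof. by case: Hform => _ _ _ H; apply: H. Qed.
Let Hfr : forall k a b c, form a (k *: b + c) = k * form a b + form a c.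
Proof. by move=> k a b c; rewrite formC Hfl !(formC a). Qed.
Let Hrl : forall k a b m u, rho (k *: a + b) m u = k *: rho a m u + rho b m u.
Proof. by case: Htw. Qed.
Let Hrr : forall k a m u u', rho a m (k *: u + u') = k *: rho a m u + rho a m u'.
Proof. by case: Htw. Qed.
Lemma rhoC a b m n u : rho a m (rho b n u) - rho b n (rho a m u) =
          rho (br a b) (m + n) u
          + ((m == - n)%:R * kappa * form (br x a + m%:~R *: a) b) *: u.
Proof. by case: Htw => _ _ H _; apply: H. Qed.
Lemma rhoF u a : exists N : int, forall m : int, N <= m -> rho a m u = 0.
Proof. by case: Htw => _ _ _ H; apply: H. Qed.

Let s1 : forall (y : g), 1 *: y = y. Proof. exact: scale1r. Qed.
Let s1c : forall (y : C), 1 * y = y. Proof. exact: mul1r. Qed.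
Let s1m : forall (y : M), 1 *: y = y. Proof. exact: scale1r. Qed.

Lemma brDl a b c : br (a + b) c = br a c + br b c.
Proof. exact: (@lfD _ _ _ _ (br^~ c) s1 (fun k a b => Hbl k a b c)). Qed.
Lemma brZl k a c : br (k *: a) c = k *: br a c.
Proof. exact: (@lfZ _ _ _ _ (br^~ c) s1 (fun k a b => Hbl k a b c)). Qed.
Lemma brNl a c : br (- a) c = - br a c.
Proof. exact: (@lfN _ _ _ _ (br^~ c) s1 (fun k a b => Hbl k a b c)). Qed.
Lemma br0l c : br 0 c = 0.
Proof. exact: (@lf0 _ _ _ _ (br^~ c) s1 (fun k a b => Hbl k a b c)). Qed.
Lemma br_suml c I r (P : pred I) F : br (\sum_(i <- r | P i) F i) c = \sum_(i <- r | P i) br (F i) c.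
Proof. exact: (@lf_sum _ _ _ _ (br^~ c) s1 (fun k a b => Hbl k a b c)). Qed.
Lemma brDr a b c : br a (b + c) = br a b + br a c.
Proof. exact: (@lfD _ _ _ _ (br a) s1 (fun k b c' => Hbr k a b c')). Qed.
Lemma brZr k a c : br a (k *: c) = k *: br a c.
Proof. exact: (@lfZ _ _ _ _ (br a) s1 (fun k b c' => Hbr k a b c')). Qed.
Lemma brNr a c : br a (- c) = - br a c.
Proof. exact: (@lfN _ _ _ _ (br a) s1 (fun k b c' => Hbr k a b c')). Qed.
Lemma br0r c : br c 0 = 0.
Proof. exact: (@lf0 _ _ _ _ (br c) s1 (fun k b c' => Hbr k c b c')). Qed.
Lemma br_sumr c I r (P : pred I) F : br c (\sum_(i <- r | P i) F i) = \sum_(i <- r | P i) br c (F i).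
Proof. exact: (@lf_sum _ _ _ _ (br c) s1 (fun k b c' => Hbr k c b c')). Qed.
Lemma brxx a : br a a = 0. Proof. by case: Hlie => _ _ H _; apply: H. Qed.
Lemma brC a b : br a b = - br b a.
Proof.
have := brxx (a + b).
rewrite brDl !brDr !brxx add0r addr0 => /eqP; rewrite addr_eq0 => /eqP //.
Qed.

Lemma formDl a b c : form (a + b) c = form a c + form b c.
Proof. exact: (@lfD _ _ _ _ (form^~ c) s1c (fun k a b => Hfl k a b c)). Qed.
Lemma formZl k a c : form (k *: a) c = k * form a c.
Proof. exact: (@lfZ _ _ _ _ (form^~ c) s1c (fun k a b => Hfl k a b c)). Qed.
Lemma formNl a c : form (- a) c = - form a c.
Proof. exact: (@lfN _ _ _ _ (form^~ c) s1c (fun k a b => Hfl k a b c)). Qed.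
Lemma form0l c : form 0 c = 0.
Proof. exact: (@lf0 _ _ _ _ (form^~ c) s1c (fun k a b => Hfl k a b c)). Qed.
Lemma form_suml c I r (P : pred I) F : form (\sum_(i <- r | P i) F i) c = \sum_(i <- r | P i) form (F i) c.
Proof. exact: (@lf_sum _ _ _ _ (form^~ c) s1c (fun k a b => Hfl k a b c)). Qed.
Lemma formDr a b c : form a (b + c) = form a b + form a c.
Proof. exact: (@lfD _ _ _ _ (form a) s1c (fun k b c' => Hfr k a b c')). Qed.
Lemma formZr k a c : form a (k *: c) = k * form a c.
Proof. exact: (@lfZ _ _ _ _ (form a) s1c (fun k b c' => Hfr k a b c')). Qed.
Lemma formNr a c : form a (- c) = - form a c.
Proof. exact: (@lfN _ _ _ _ (form a) s1c (fun k b c' => Hfr k a b c')). Qed.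
Lemma form0r c : form c 0 = 0.
Proof. exact: (@lf0 _ _ _ _ (form c) s1c (fun k b c' => Hfr k c b c')). Qed.
Lemma form_sumr c I r (P : pred I) F : form c (\sum_(i <- r | P i) F i) = \sum_(i <- r | P i) form c (F i).
Proof. exact: (@lf_sum _ _ _ _ (form c) s1c (fun k b c' => Hfr k c b c')). Qed.

Lemma rhoDl a b m u : rho (a + b) m u = rho a m u + rho b m u.
Proof. exact: (@lfD _ _ _ _ (fun a => rho a m u) s1m (fun k a b => Hrl k a b m u)). Qed.
Lemma rhoZl k a m u : rho (k *: a) m u = k *: rho a m u.
Proof. exact: (@lfZ _ _ _ _ (fun a => rho a m u) s1m (fun k a b => Hrl k a b m u)). Qed.
Lemma rhoNl a m u : rho (- a) m u = - rho a m u.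
Proof. exact: (@lfN _ _ _ _ (fun a => rho a m u) s1m (fun k a b => Hrl k a b m u)). Qed.
Lemma rho0l m u : rho 0 m u = 0.
Proof. exact: (@lf0 _ _ _ _ (fun a => rho a m u) s1m (fun k a b => Hrl k a b m u)). Qed.
Lemma rho_suml m u I r (P : pred I) F : rho (\sum_(i <- r | P i) F i) m u = \sum_(i <- r | P i) rho (F i) m u.
Proof. exact: (@lf_sum _ _ _ _ (fun a => rho a m u) s1m (fun k a b => Hrl k a b m u)). Qed.
Lemma rhoDr a m u u' : rho a m (u + u') = rho a m u + rho a m u'.
Proof. exact: (@lfD _ _ _ _ (rho a m) s1m (fun k u u' => Hrr k a m u u')). Qed.
Lemma rhoZr k a m u : rho a m (k *: u) = k *: rho a m u.
Proof. exact: (@lfZ _ _ _ _ (rho a m) s1m (fun k u u' => Hrr k a m u u')). Qed.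
Lemma rhoNr a m u : rho a m (- u) = - rho a m u.
Proof. exact: (@lfN _ _ _ _ (rho a m) s1m (fun k u u' => Hrr k a m u u')). Qed.
Lemma rhoBr a m u u' : rho a m (u - u') = rho a m u - rho a m u'.
Proof. exact: (@lfB _ _ _ _ (rho a m) s1m (fun k u u' => Hrr k a m u u')). Qed.
Lemma rho0r a m : rho a m 0 = 0.
Proof. exact: (@lf0 _ _ _ _ (rho a m) s1m (fun k u u' => Hrr k a m u u')). Qed.
Lemma rho_sumr a m I r (P : pred I) F : rho a m (\sum_(i <- r | P i) F i) = \sum_(i <- r | P i) rho a m (F i).
Proof. exact: (@lf_sum _ _ _ _ (rho a m) s1m (fun k u u' => Hrr k a m u u')). Qed.

Lemma expand (p q : 'I_d -> g) : (forall i j, form (p i) (q j) = (i == j)%:R) ->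
  forall z, z = \sum_i form (p i) z *: q i.
Proof.
move=> pq z.
pose Q : 'M[C]_d := \matrix_(i, j) q i 0 j.
have rowQ i : row i Q = q i by apply/rowP=> j; rewrite !mxE.
have phiQ (c : 'rV[C]_d) j : form (p j) (c *m Q) = c 0 j.
  rewrite mulmx_sum_row form_sumr; under eq_bigr do rewrite rowQ formZr pq.
  rewrite (bigD1 j) //= eqxx mulr1 big1 ?addr0 // => i ne.
  by rewrite eq_sym (negbTE ne) mulr0.
have fQ : row_free Q.
  apply: inj_row_free => c cQ0; apply/rowP => j.
  by rewrite -phiQ cQ0 form0r mxE.
have uQ : Q \in unitmx by rewrite -row_free_unit.
have zc : z = (z *m invmx Q) *m Q by rewrite mulmxKV.
rewrite [in RHS]zc; under eq_bigr do rewrite phiQ -rowQ.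
by rewrite -mulmx_sum_row -zc.
Qed.

Lemma E1 z : z = \sum_i form (vb i) z *: wb i.
Proof. exact: (expand vb wb Hdual). Qed.
Lemma E2 z : z = \sum_i form z (wb i) *: vb i.
Proof.
have h i j : form (wb i) (vb j) = (i == j)%:R by rewrite formC Hdual eq_sym.
rewrite {1}(expand wb vb h z).
by apply: eq_bigr => i _; rewrite formC.
Qed.

Section Bil.
Variables (V : lmodType C) (E : g -> g -> V).
Hypothesis HEl : forall k a b c, E (k *: a + b) c = k *: E a c + E b c.
Hypothesis HEr : forall k a b c, E a (k *: b + c) = k *: E a b + E a c.
Let s1v : forall (y : V), 1 *: y = y. Proof. exact: scale1r. Qed.

Lemma Esumr c I r (P : pred I) (F : I -> g) (k : I -> C) :
  E c (\sum_(i <- r | P i) k i *: F i) = \sum_(i <- r | P i) k i *: E c (F i).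
Proof.
rewrite (@lf_sum _ _ _ _ (E c) s1v (fun k a b => HEr k c a b)).
by apply: eq_bigr => i _; rewrite (@lfZ _ _ _ _ (E c) s1v (fun k a b => HEr k c a b)).
Qed.
Lemma Esuml c I r (P : pred I) (F : I -> g) (k : I -> C) :
  E (\sum_(i <- r | P i) k i *: F i) c = \sum_(i <- r | P i) k i *: E (F i) c.
Proof.
rewrite (@lf_sum _ _ _ _ (E^~ c) s1v (fun k a b => HEl k a b c)).
by apply: eq_bigr => i _; rewrite (@lfZ _ _ _ _ (E^~ c) s1v (fun k a b => HEl k a b c)).
Qed.
Lemma ENr a b : E a (- b) = - E a b.
Proof. exact: (@lfN _ _ _ _ (E a) s1v (fun k b c => HEr k a b c)). Qed.

Lemma I0 : \sum_i E (vb i) (wb i) = \sum_i E (wb i) (vb i).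
Proof.
transitivity (\sum_j \sum_i form (wb j) (wb i) *: E (vb j) (vb i)).
  by apply: eq_bigr => j _; rewrite {1}(E2 (wb j)) Esumr.
rewrite exchange_big /=; apply: eq_bigr => i _.
rewrite [in RHS](E2 (wb i)) Esuml; apply: eq_bigr => j _.
by rewrite formC.
Qed.

Lemma I1 a : \sum_i E (br (vb i) a) (wb i) = - \sum_i E (vb i) (br (wb i) a).
Proof.
transitivity (\sum_i \sum_j form (br (vb i) a) (wb j) *: E (vb j) (wb i)).
  by apply: eq_bigr => i _; rewrite {1}(E2 (br (vb i) a)) Esuml.
rewrite exchange_big /= -sumrN; apply: eq_bigr => j _.
rewrite -Esumr; under eq_bigr do rewrite formI.
by rewrite -E1 brC ENr.
Qed.
End Bil.

Lemma trace_lemma (f : g -> g) : (forall k a b, f (k *: a + b) = k *: f a + f b) ->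
  \sum_j (f (delta_mx 0 j)) 0 j = \sum_i form (vb i) (f (wb i)).
Proof.
move=> Hf.
transitivity (\sum_j \sum_i form (vb i) (f (delta_mx 0 j)) * wb i 0 j).
  apply: eq_bigr => j _; rewrite {1}(E1 (f (delta_mx 0 j))) summxE.
  by apply: eq_bigr => i _; rewrite mxE.
rewrite exchange_big /=; apply: eq_bigr => i _.
rewrite {2}(row_sum_delta (wb i)) (@lf_sum _ _ _ _ f s1 Hf) form_sumr.
apply: eq_bigr => j _; rewrite (@lfZ _ _ _ _ f s1 Hf) formZr mulrC //.
Qed.

Lemma killingE a b : killing br a b = \sum_i form (vb i) (br b (br a (wb i))).
Proof.
have := trace_lemma (fun z => br b (br a z)) => /= <-; last first.
  by move=> k u v; rewrite Hbr brDr brZr.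
rewrite /killing /mxtrace; apply: eq_bigr => j _; rewrite !mxE.
rewrite /lin1_mx; under eq_bigr do rewrite !mxE. rewrite {2}(row_sum_delta (br a (delta_mx 0 j))) br_sumr summxE.
by apply: eq_bigr => k _; rewrite brZr !mxE.
Qed.

Lemma Cas a : \sum_i br (vb i) (br (wb i) a) = (2 * hv%:R) *: a.
Proof.
apply/eqP; rewrite -subr_eq0; apply/eqP/formND => b.
rewrite formDl formNl formZl -Hkill killingE form_suml; apply/eqP; rewrite subr_eq0; apply/eqP.
apply: eq_bigr => i _; rewrite formI; congr (form _ _).
by rewrite brC (brC (wb i)) brNr opprK.
Qed.

Definition ann (u : M) (L : nat) := forall b k, L%:Z <= k -> rho b k u = 0.

Lemma ann_mono u L L' : ann u L -> (L <= L')%N -> ann u L'.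
Proof. by move=> h hL b k hk; apply: h; lia. Qed.

Lemma ann_exists u : exists L : nat, ann u L.
Proof.
have [N HN] : exists N : int, forall i m, N <= m -> rho (wb i) m u = 0.
  suff : forall s : seq 'I_d, exists N : int, forall i m, i \in s -> N <= m -> rho (wb i) m u = 0.
    by case/(_ (enum 'I_d)) => N HN; exists N => i m; apply: HN; rewrite mem_enum.
  elim=> [|i s [N2 IH]]; first by exists 0.
  have [N1 H1] := rhoF u (wb i).
  exists (Num.max N1 N2) => j m; rewrite inE => /orP[/eqP -> | js] hm.
    by apply: H1; lia.
  by apply: IH => //; lia.
exists (absz N) => b k hk; rewrite (E1 b) rho_suml big1 // => i _.
by rewrite rhoZl HN ?scaler0 //; lia.
Qed.

Lemma sigma_fin u v w L : ann u L ->
  (\sum_(m \in [set: int]) normal_ord rho v w m (-1 - m) u)%classic =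
  \sum_(j < L) (rho v (-1 - j%:Z) (rho w j u) + rho w (-1 - j%:Z) (rho v j u)).
Proof.
move=> hu.
pose r := [seq -1 - j%:Z | j <- iota 0 L] ++ [seq j%:Z | j <- iota 0 L].
rewrite (fsbigE r).
- rewrite big_cat !big_map /=.
  under eq_bigl do rewrite in_setT.
  under [X in _ + X]eq_bigl do rewrite in_setT.
  rewrite (_ : iota 0 L = index_iota 0 L); last by rewrite /index_iota subn0.
  rewrite !big_mkord -big_split /=.
  apply: eq_bigr => j _; rewrite /normal_ord ifT; last by lia.
  rewrite ltNge (_ : 0 <= j%:Z) //=.
  congr (rho _ _ (rho _ _ _) + _); lia.
- rewrite cat_uniq !map_inj_uniq ?iota_uniq //; last 2 first.
  + by move=> i j /eqP; rewrite eqz_nat => /eqP.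
  + by move=> i j h; lia.
  rewrite andbT /=; apply/hasPn => m /mapP [j _ ->]; apply/mapP => [[k _]]; lia.
- by [].
- move=> m _ mr; rewrite /normal_ord; case: ifP => hm.
  + case: (boolP (-1 - m < L%:Z)) => h.
      exfalso; move/negP: mr; apply; rewrite mem_cat; apply/orP; left.
      apply/mapP; exists (absz (-1 - m)%R); first by rewrite mem_iota; lia.
      lia.
    by rewrite hu ?rho0r //; lia.
  + case: (boolP (m < L%:Z)) => h.
      exfalso; move/negP: mr; apply; rewrite mem_cat; apply/orP; right.
      apply/mapP; exists (absz m); first by rewrite mem_iota; lia.
      lia.
    by rewrite (hu v) ?rho0r //; lia.
Qed.

Lemma Yx : \sum_i br (br x (vb i)) (wb i) = (2 * hv%:R) *: x.
Proof.
transitivity (\sum_i br (wb i) (br (vb i) x)).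
  by apply: eq_bigr => i _; rewrite brC (brC x) brNr opprK.
have H0 := @I0 _ (fun p q => br p (br q x)); rewrite /= in H0.
rewrite -H0; try by move=> k a b c; rewrite ?(Hbl, Hbr).
exact: Cas.
Qed.

Lemma Pair (p q : int) u a : \sum_i rho (vb i) p (rho (br (wb i) a) q u)
  = - \sum_i rho (br (wb i) a) p (rho (vb i) q u).
Proof.
have H0 := @I0 _ (fun p' q' => rho p' p (rho (br q' a) q u)).
have H1 := @I1 _ (fun p' q' => rho q' p (rho p' q u)).
rewrite /= in H0 H1.
rewrite H0; try by move=> k a' b c; rewrite ?(Hbl, Hbr, Hrl, Hrr).
rewrite H1; try by move=> k a' b c; rewrite ?(Hbl, Hbr, Hrl, Hrr).
all: by [].
Qed.

Lemma delta_sum (L : nat) (t : int) (f : int -> M) :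
  \sum_(j < L) (j%:Z == t)%:R *: f j = ((0 <= t) && (t < L%:Z))%:R *: f t.
Proof.
case: (boolP ((0 <= t) && (t < L%:Z))) => h.
  have hj : (absz t < L)%N by lia.
  have et : (absz t)%:Z = t by lia.
  rewrite (bigD1 (Ordinal hj)) //= et eqxx big1 ?addr0 // => j ne.
  have [e|ne'] := eqVneq (j%:Z) t; last by rewrite scale0r.
  by exfalso; move/negP: ne; apply; apply/eqP/val_inj => /=; lia.
rewrite scale0r big1 // => j _.
have [e|ne'] := eqVneq (j%:Z) t; last by rewrite scale0r.
by exfalso; move/negP: h; apply; move: (ltn_ord j) => hjL; apply/andP; split; lia.
Qed.

Lemma window (F : int -> M) (L0 : nat) (n : int) :
  (forall m, m <= n - 1 - L0%:Z -> F m = 0) ->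
  \sum_(j < L0 + absz n) F (-1 - j%:Z) - \sum_(j < L0 + absz n) F (n - 1 - j%:Z) =
  if 0 <= n then - \sum_(j < absz n) F (n - 1 - j%:Z)
  else \sum_(j < absz n) F (-1 - j%:Z).
Proof.
move=> hF; case: n hF => k hF /=.
- rewrite [in X in _ - X](addnC L0) !big_split_ord /=.
  rewrite [X in _ + X - _]big1 => [|j _]; last by apply: hF; lia.
  rewrite addr0 opprD addrA.
  rewrite (_ : \sum_(i < L0) F (k%:Z - 1 - (k + i)%N%:Z) = \sum_(i < L0) F (-1 - i%:Z)).
    by rewrite addrAC subrr add0r.
  by apply: eq_bigr => j _; congr F; lia.
- rewrite [in X in X - _](addnC L0) !big_split_ord /=.
  rewrite [X in _ - (_ + X)]big1 => [|j _]; last by apply: hF; rewrite NegzE; lia.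
  rewrite addr0 (_ : \sum_(i < L0) F (Negz k - 1 - i%:Z) = \sum_(i < L0) F (-1 - (k.+1 + i)%N%:Z)).
    by rewrite addrK.
  by apply: eq_bigr => j _; rewrite NegzE; congr F; lia.
Qed.

Lemma Ypart_i u v c n L0 : ann u L0 ->
  \sum_(j < L0 + absz n) rho v (-1 - j%:Z) (rho c (n - 1 - (-1 - j%:Z)) u)
  - \sum_(j < L0 + absz n) rho v (n - 1 - j%:Z) (rho c (n - 1 - (n - 1 - j%:Z)) u)
  = if 0 <= n then - \sum_(j < absz n) rho v (n - 1 - j%:Z) (rho c j u)
    else \sum_(j < absz n) rho v (-1 - j%:Z) (rho c (n + j%:Z) u).
Proof.
move=> hu.
have hF : forall m, m <= n - 1 - L0%:Z -> rho v m (rho c (n - 1 - m) u) = 0.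
  by move=> m hm; rewrite hu ?rho0r //; lia.
have /= -> := window _ _ _ hF.
by case: ifP => _; [congr (- _)|]; apply: eq_bigr => j _; congr (rho _ _ (rho _ _ _)); lia.
Qed.

Lemma sumE2 u a (p : int) :
  \sum_i rho (br (vb i) (br (wb i) a)) p u = (2 * hv%:R) *: rho a p u.
Proof. by rewrite -rho_suml Cas rhoZl. Qed.

Lemma sumXform a :
  \sum_i form (br x (vb i)) (br (wb i) a) = 2 * hv%:R * form x a.
Proof. by under eq_bigr do rewrite -formI; rewrite -form_suml Yx formZl. Qed.

Lemma rhoCs (p q s : int) a' b' u : p + q = s ->
  rho a' p (rho b' q u) - rho b' q (rho a' p u) =
  rho (br a' b') s u + ((p == - q)%:R * kappa * form (br x a' + p%:~R *: a') b') *: u.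
Proof. by move=> <-; apply: rhoC. Qed.

Lemma Ypart u a n L0 : ann u L0 ->
  2 *: (\sum_i \sum_(j < L0 + absz n) rho (vb i) (-1 - j%:Z) (rho (br (wb i) a) (n - 1 - (-1 - j%:Z)) u)
   + \sum_i \sum_(j < L0 + absz n) rho (br (vb i) a) (n - 1 - j%:Z) (rho (wb i) j u))
  = - ((n%:~R * (2 * hv%:R)) *: rho a (n - 1) u)
    - ((n == 1)%:R * (kappa * (2 * hv%:R * form x a))) *: u.
Proof.
move=> hu.
set L := (L0 + absz n)%N.
have H1 := @I1 _ (fun p q => \sum_(j < L) rho p (n - 1 - j%:Z) (rho q j u)).
rewrite /= in H1; rewrite H1; try by move=> k a' b c; rewrite scaler_sumr -big_split; apply: eq_bigr => j _; rewrite ?(Hbl, Hbr, Hrl, Hrr).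
rewrite (_ : \sum_i \sum_(j < L) rho (vb i) (n - 1 - j%:Z) (rho (br (wb i) a) j u) =
  \sum_i \sum_(j < L) rho (vb i) (n - 1 - j%:Z) (rho (br (wb i) a) (n - 1 - (n - 1 - j%:Z)) u)); last first.
  by apply: eq_bigr => i _; apply: eq_bigr => j _; congr (rho _ _ (rho _ _ _)); lia.
rewrite -sumrB; under eq_bigr do rewrite Ypart_i //.
clear H1; case: n @L => k L /=.
-
  rewrite sumrN scalerN.
  set X := \sum_i \sum_(j < k) rho (vb i) (k%:Z - 1 - j%:Z) (rho (br (wb i) a) j u).
  have HX : X = - \sum_i \sum_(j < k) rho (br (wb i) a) j (rho (vb i) (k%:Z - 1 - j%:Z) u).
    rewrite /X exchange_big /=; under eq_bigr do rewrite Pair.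
    rewrite sumrN exchange_big /=; congr (- _); apply: eq_bigr => i _.
    rewrite (reindex_inj rev_ord_inj) /=; apply: eq_bigr => j _.
    by move: (ltn_ord j) => hj; congr (rho _ _ (rho _ _ _)); lia.
  have -> : 2 *: X = X - (- X) by rewrite opprK -[X in X + X]scale1r -scalerDl.
  rewrite {2}HX opprK -sumrB /=.
  under eq_bigr do rewrite -sumrB /=.
  have Hs (j : nat) : k%:Z - 1 - j%:Z + j%:Z = k%:Z - 1 by lia.
  have Hb (j : nat) : (k%:Z - 1 - j%:Z == - j%:Z) = (k == 1)%N by apply/eqP/eqP; lia.
  under eq_bigr => i _ do under eq_bigr => j _ do rewrite (rhoCs _ _ _ _ _ _ (Hs j)) Hb.
  rewrite (_ : (k%:Z == 1) = (k == 1)%N) //.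
  under eq_bigr do rewrite big_split /=.
  rewrite big_split /= exchange_big /=.
  under eq_bigr do rewrite sumE2.
  rewrite sumr_const card_ord -scaler_nat -[k%:~R]/(k%:R) scalerA.
  rewrite opprD; congr (_ - _).
  case: (eqVneq k 1%N) => [k1|kn1].
    subst k; under eq_bigr => i _ do rewrite big_ord1 /= (_ : 1%Z - 1 - 0%Z = 0) // mulr0z scale0r addr0.
    by rewrite -scaler_suml (_ : true%:R = 1 :> C) // !mul1r -mulr_sumr sumXform.
  rewrite (_ : false%:R = 0 :> C) // [RHS](_ : _ = 0); last by rewrite mul0r scale0r.
  by rewrite big1 // => i _; rewrite big1 // => j _; rewrite ?mul0r scale0r.
-
  rewrite mul0r scale0r subr0.
  set X := \sum_i \sum_(j < k.+1) rho (vb i) (-1 - j%:Z) (rho (br (wb i) a) (Negz k + j%:Z) u).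
  have HX : X = - \sum_i \sum_(j < k.+1) rho (br (wb i) a) (Negz k + j%:Z) (rho (vb i) (-1 - j%:Z) u).
    rewrite /X exchange_big /=; under eq_bigr do rewrite Pair.
    rewrite sumrN exchange_big /=; congr (- _); apply: eq_bigr => i _.
    rewrite (reindex_inj rev_ord_inj) /=; apply: eq_bigr => j _.
    by move: (ltn_ord j) => hj; rewrite NegzE; congr (rho _ _ (rho _ _ _)); lia.
  have -> : 2 *: X = X - (- X) by rewrite opprK -[X in X + X]scale1r -scalerDl.
  rewrite {2}HX opprK -sumrB /=.
  under eq_bigr do rewrite -sumrB /=.
  have Hs (j : nat) : -1 - j%:Z + (Negz k + j%:Z) = Negz k - 1 by rewrite NegzE; lia.
  have Hb (j : nat) : (-1 - j%:Z == - (Negz k + j%:Z)) = false by apply/negbTE/eqP; rewrite NegzE; lia.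
  under eq_bigr => i _ do under eq_bigr => j _ do rewrite (rhoCs _ _ _ _ _ _ (Hs j)) Hb.
  under eq_bigr do under eq_bigr do rewrite !mul0r scale0r addr0.
  rewrite exchange_big /=.
  under eq_bigr do rewrite sumE2.
  by rewrite sumr_const card_ord -scaler_nat scalerA NegzE intrN mulNr scaleNr opprK -pmulrn.
Qed.

Lemma S2 u L : ann u L ->
  \sum_i (\sum_(m \in [set: int]) normal_ord rho (vb i) (wb i) m (-1 - m) u)%classic
  = 2 *: \sum_i \sum_(j < L) rho (vb i) (-1 - j%:Z) (rho (wb i) j u).
Proof.
move=> hu; under eq_bigr => i _ do rewrite (sigma_fin _ _ _ _ hu) big_split.
rewrite big_split /=.
have H0 := @I0 _ (fun p q => \sum_(j < L) rho p (-1 - j%:Z) (rho q j u)).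
rewrite /= in H0; rewrite -H0; try by move=> k a' b c; rewrite scaler_sumr -big_split; apply: eq_bigr => j _; rewrite ?(Hbl, Hbr, Hrl, Hrr).
by rewrite -[X in X + X]scale1r -scalerDl.
Qed.

Lemma Qcomm u a n L :
  \sum_i \sum_(j < L) rho (vb i) (-1 - j%:Z) (rho (wb i) j (rho a n u))
  - rho a n (\sum_i \sum_(j < L) rho (vb i) (-1 - j%:Z) (rho (wb i) j u))
  = (\sum_i \sum_(j < L) rho (vb i) (-1 - j%:Z) (rho (br (wb i) a) (n - 1 - (-1 - j%:Z)) u)
     + \sum_i \sum_(j < L) rho (br (vb i) a) (n - 1 - j%:Z) (rho (wb i) j u))
  + (\sum_i \sum_(j < L) ((j%:Z == - n)%:R * kappa * form (br x (wb i) + (j%:Z)%:~R *: wb i) a) *: rho (vb i) (-1 - j%:Z) u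
     + \sum_i \sum_(j < L) ((-1 - j%:Z == - n)%:R * kappa * form (br x (vb i) + (-1 - j%:Z)%:~R *: vb i) a) *: rho (wb i) j u).
Proof.
rewrite rho_sumr -sumrB -!big_split /=; apply: eq_bigr => i _.
rewrite rho_sumr -sumrB -!big_split /=; apply: eq_bigr => j _.
rewrite (_ : rho (vb i) (-1 - j%:Z) (rho (wb i) j (rho a n u)) - rho a n (rho (vb i) (-1 - j%:Z) (rho (wb i) j u))
  = rho (vb i) (-1 - j%:Z) (rho (wb i) j (rho a n u) - rho a n (rho (wb i) j u))
    + (rho (vb i) (-1 - j%:Z) (rho a n (rho (wb i) j u)) - rho a n (rho (vb i) (-1 - j%:Z) (rho (wb i) j u)))); last first.
  by rewrite rhoBr addrA subrK.
rewrite rhoC rhoC rhoDr rhoZr.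
have -> : j%:Z + n = n - 1 - (-1 - j%:Z) by lia.
have -> : -1 - j%:Z + n = n - 1 - j%:Z by lia.
by rewrite addrACA.
Qed.

Lemma formXw w t a : form (br x w + t *: w) a = form (t *: a - br x a) w.
Proof.
rewrite formDl formZl formDl formNl formZl !formI (brC a w) formNr opprK (formC w a).
by rewrite addrC.
Qed.

Lemma Zpart a n u L0 : (0 < L0)%N ->
  \sum_i \sum_(j < L0 + absz n) ((j%:Z == - n)%:R * kappa * form (br x (wb i) + (j%:Z)%:~R *: wb i) a) *: rho (vb i) (-1 - j%:Z) u
  + \sum_i \sum_(j < L0 + absz n) ((-1 - j%:Z == - n)%:R * kappa * form (br x (vb i) + (-1 - j%:Z)%:~R *: vb i) a) *: rho (wb i) j u
  = kappa *: rho ((- n)%:~R *: a - br x a) (n - 1) u.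
Proof.
move=> hL0; set L := (L0 + absz n)%N.
have Hb (j : nat) : (-1 - j%:Z == - n) = (j%:Z == n - 1) by apply/eqP/eqP; lia.
under eq_bigr => i _ do under eq_bigr => j _ do rewrite -mulrA -scalerA.
under eq_bigr => i _ do rewrite (delta_sum L (- n) (fun m => (kappa * form (br x (wb i) + m%:~R *: wb i) a) *: rho (vb i) (-1 - m) u)).
under [X in _ + X]eq_bigr => i _ do under eq_bigr => j _ do rewrite Hb -mulrA -scalerA.
under [X in _ + X]eq_bigr => i _ do rewrite (delta_sum L (n - 1) (fun m => (kappa * form (br x (vb i) + (-1 - m)%:~R *: vb i) a) *: rho (wb i) m u)).
have e1 : -1 - - n = n - 1 by lia.
have e2 : -1 - (n - 1) = - n by lia.
rewrite /= e1 e2 -!scaler_sumr.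
under eq_bigr do rewrite formXw -scalerA -rhoZl.
under [X in _ + _ *: X]eq_bigr do rewrite formXw formC -scalerA -rhoZl.
rewrite -!scaler_sumr -!rho_suml -E2 -E1 -scalerDl.
have b1 : ((0 <= - n) && (- n < L%:Z)) = (n <= 0) by apply/andP/idP => [[? ?]|?]; [lia|split; lia].
have b2 : ((0 <= n - 1) && (n - 1 < L%:Z)) = ~~ (n <= 0).
  by apply/andP/idP => [[? ?]|?]; [lia|split; lia].
by rewrite b1 b2; case: (n <= 0); rewrite /= ?addr0 ?add0r scale1r.
Qed.

Lemma Tpart a n u :
  \sum_i rho (br (br x (vb i)) (wb i)) (-1) (rho a n u) - rho a n (\sum_i rho (br (br x (vb i)) (wb i)) (-1) u)
  = (2 * hv%:R) *: rho (br x a) (n - 1) u - ((n == 1)%:R * kappa * (2 * hv%:R * form x a)) *: u.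
Proof.
rewrite rho_sumr -sumrB; under eq_bigr do rewrite rhoC.
rewrite big_split /= -rho_suml -br_suml Yx brZl rhoZl.
rewrite -scaler_suml -mulr_sumr -form_suml big_split /= -br_sumr -scaler_sumr Yx.
rewrite brZr brxx scaler0 add0r formZl formZl eqr_opp (addrC (-1)).
congr (_ + _); rewrite -scaleNr; congr (_ *: _).
rewrite (_ : ((-1)%:~R : C) = -1); last by rewrite intrN.
by rewrite eq_sym mulN1r mulrN.
Qed.

Lemma main_sec (hk : kappa != - hv%:R) a n u :
  sugawara br x kappa hv vb wb rho (-1) (rho a n u)
  - rho a n (sugawara br x kappa hv vb wb rho (-1) u)
  = - (n%:~R *: rho a (n - 1) u) - rho (br x a) (n - 1) u.
Proof.
have [L1 h1] := ann_exists u; have [L2 h2] := ann_exists (rho a n u).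
set L0 := (L1 + L2).+1.
have hL0 : (0 < L0)%N by [].
have hu0 : ann u L0 by apply: ann_mono h1 _; lia.
have hu : ann u (L0 + absz n) by apply: ann_mono h1 _; lia.
have hau : ann (rho a n u) (L0 + absz n) by apply: ann_mono h2 _; lia.
rewrite /sugawara (rhoZr ((2 * (kappa + hv%:R))^-1)) rhoBr (S2 _ _ hau) (S2 _ _ hu) (rhoZr 2) -scalerBr.
rewrite (_ : forall (p q r s : M), (2 *: p - q) - (2 *: r - s) = 2 *: (p - r) - (q - s)); last first.
  by move=> p q r s; rewrite scalerBr !opprB addrA addrAC (addrAC _ (- q)) -!addrA (addrC s).
rewrite Qcomm Tpart (scalerDr 2) (Ypart _ _ _ _ hu0) (Zpart _ _ _ _ hL0).
rewrite rhoDl rhoNl rhoZl.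
set A := rho a (n - 1) u; set B := rho (br x a) (n - 1) u.
set K := 2 * (kappa + hv%:R).
have hK : kappa + hv%:R != 0.
  apply: contra hk => /eqP h.
  by rewrite -(subr0 kappa) -h opprD addNKr.
pose f (p : C * C * C) := p.1.1 *: A + p.1.2 *: B + p.2 *: u.
have fD p q : f p + f q = f (p.1.1 + q.1.1, p.1.2 + q.1.2, p.2 + q.2).
  by rewrite /f /= !scalerDl addrACA [X in X + _ = _]addrACA.
have fZ (c : C) p : c *: f p = f (c * p.1.1, c * p.1.2, c * p.2).
  by rewrite /f /= !scalerDr !scalerA.
have fN p : - f p = f (- p.1.1, - p.1.2, - p.2).
  by rewrite /f /= !scaleNr !opprD.
have hA : A = f (1, 0, 0) by rewrite /f /= scale1r !scale0r !addr0.
have hB : B = f (0, 1, 0) by rewrite /f /= scale1r !scale0r add0r addr0.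
have hU : u = f (0, 0, 1) by rewrite /f /= scale1r !scale0r !add0r.
rewrite [in LHS]hU hA hB.
rewrite !(fZ, fD, fN) /=.
rewrite intrN; congr f; congr (_, _, _); rewrite /K; field.
all: exact: hK.
Qed.
End Main.


Theorem mainTheorem2 (R : realType) (d : nat)
  (br : 'rV[R[i]]_d -> 'rV[R[i]]_d -> 'rV[R[i]]_d)
  (form : 'rV[R[i]]_d -> 'rV[R[i]]_d -> R[i]) (hv : nat)
  (vb wb : 'I_d -> 'rV[R[i]]_d) (x : 'rV[R[i]]_d) (kappa : R[i])
  (M : lmodType R[i]) (rho : 'rV[R[i]]_d -> int -> M -> M) :
  lie_bracket br -> lie_simple br ->
  invariant_form br form -> (0 < hv)%N ->
  (forall a b, killing br a b = 2 * hv%:R * form a b) ->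
  (forall i j, form (vb i) (wb j) = (i == j)%:R) ->
  lie_nilpotent br x ->
  kappa != - hv%:R ->
  twisted_module br form x kappa rho ->
  forall (a : 'rV[R[i]]_d) (n : int) (u : M),
    sugawara br x kappa hv vb wb rho (-1) (rho a n u)
    - rho a n (sugawara br x kappa hv vb wb rho (-1) u)
    = - (n%:~R *: rho a (n - 1) u) - rho (br x a) (n - 1) u.
Proof.
move=> Hlie _ Hform _ Hkill Hdual _ hk Htw a n u.
exact: (@main_sec R d br form hv vb wb x kappa M rho Hlie Hform Hkill Hdual Htw hk a n u).
Qed.
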